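(* Let $\Gamma$ be a connected finite simple graph on $N\ge3$ vertices with $\varepsilon>\frac12$. Then for every vertex $v$ there exists $w\in\mathcal N(v)$ with $\deg w\le3$.
   Context: For a finite simple graph $\Gamma=(V,E)$ without isolated vertices, $\deg v$ is the number of neighbours of $v$ and $\mathcal N(v)=\{w\in V: w\sim v\}$. The normalized Laplacian acts on functions $f:V\to\mathbb R$ by $\Delta f(v)=f(v)-\frac{1}{\deg v}\sum_{w\sim v}f(w)$; its eigenvalues are $0=\lambda_1\le\lambda_2\le\dots\le\lambda_N$, and $\varepsilon:=\min_i|1-\lambda_i|$. *)

(* Defs.v *)
From HB Require Import structures.
From mathcomp Require Import all_boot all_order all_algebra.
From mathcomp Require Import reals.
Set Implicit Arguments. Unset Strict Implicit. Unset Printing Implicit Defensive.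
Import Order.TTheory GRing.Theory Num.Theory.
Local Open Scope ring_scope.

Definition simple_graph (n : nat) (adj : rel 'I_n) : Prop :=
  symmetric adj /\ irreflexive adj.

Definition connected_graph (n : nat) (adj : rel 'I_n) : Prop :=
  forall x y : 'I_n, connect adj x y.

Definition deg (n : nat) (adj : rel 'I_n) (v : 'I_n) : nat :=
  #|[set w | adj v w]|.

(* matrix of the normalized Laplacian
   (Delta f)(v) = f v - (1/deg v) sum_{w ~ v} f w *)
Definition nlap (R : fieldType) (n : nat) (adj : rel 'I_n) : 'M[R]_n :=
  \matrix_(i, j) ((i == j)%:R - (adj i j)%:R / (deg adj i)%:R).

(* Main.v *)
Require Import Defs.
From HB Require Import structures.
From mathcomp Require Import all_boot all_order all_algebra.
From mathcomp Require Import reals.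
From mathcomp Require Import spectral sesquilinear complex.
From mathcomp Require Import ring lra.
Import Order.TTheory GRing.Theory Num.Theory.
Set Implicit Arguments. Unset Strict Implicit.
Local Open Scope ring_scope.

Section Spec.
Local Open Scope sesquilinear_scope.
Lemma spec_bound (R : rcfType) n (S : 'M[R]_n) (x : 'rV[R]_n) (c : R) :
  S^T = S -> x != 0 ->
  \sum_j ((x *m S) 0 j)^+2 <= c * \sum_j (x 0 j)^+2 ->
  exists2 k, eigenvalue S k & k^+2 <= c.
Proof.
move=> Ssym xn0 Hin.
pose phi : {rmorphism R -> R[i]} := real_complex R.
have phireal (r : R) : phi r \is Num.real by apply/complex_realP; exists r.
pose Sc := S ^ phi.
have herm : Sc \is hermsymmx.
  apply/is_hermitianmxP; rewrite expr0 scale1r; apply/matrixP=> i j.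
  have := congr1 (fun M : 'M_n => M j i) Ssym; rewrite mxE => Hs.
  rewrite !mxE conj_Creal // Hs //.
set U := spectralmx Sc; set d := spectral_diag Sc.
have Uu : U \is unitarymx := spectral_unitarymx Sc.
have Uunit : U \in unitmx := spectral_unit Sc.
have /orthomx_spectralP eqS := hermitian_normalmx herm.
have iU : invmx U = U^t* := invmx_unitary Uu.
have dreal := hermitian_spectral_diag_real herm.
pose N (z : 'rV[R[i]]_n) := (z *m z^t*) 0 0.
have NE z : N z = \sum_j `|z 0 j|^+2.
  by rewrite /N mxE; apply: eq_bigr => j _; rewrite !mxE normCK.
have NU z : N (z *m U) = N z.
  rewrite /N trmx_mul map_mxM mulmxA -(mulmxA z U) (unitarymxP Uu) mulmx1 //.
have NR (r : 'rV[R]_n) : N (r ^ phi) = phi (\sum_j (r 0 j)^+2).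
  rewrite /N !mxE rmorph_sum; apply: eq_bigr => j _.
  by rewrite !mxE conj_Creal // rmorphXn expr2.
pose xc := x ^ phi; pose y := xc *m U^t*.
have yU : y *m U = xc by rewrite /y -mulmxA -iU mulVmx // mulmx1.
have xS : xc *m Sc = y *m diag_mx d *m U by rewrite eqS iU !mulmxA.
have ineq : \sum_j `|y 0 j|^+2 * `|d 0 j|^+2 <= phi c * \sum_j `|y 0 j|^+2.
  have -> : \sum_j `|y 0 j|^+2 * `|d 0 j|^+2 = N (xc *m Sc).
    rewrite xS NU NE; apply: eq_bigr => j _.
    by rewrite mul_mx_diag [in RHS]mxE normrM exprMn.
  rewrite -NE -(NU y) yU /xc -map_mxM !NR -rmorphM.
  by rewrite /phi /= lecR.
rewrite -/U -/d in eqS.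
have dj j : d 0 j = phi (complex.Re (d 0 j)).
  by rewrite /phi /= RRe_real //; exact: (mxOverP dreal 0 j).
have [j Hj] : exists j, complex.Re (d 0 j) ^+ 2 <= c.
  case: (boolP [exists j, complex.Re (d 0 j) ^+ 2 <= c]) => [/existsP //|].
  rewrite negb_exists => /forallP Hall; exfalso.
  have Hpos j : 0 < `|d 0 j|^+2 - phi c.
    rewrite subr_gt0 {1}(dj j) real_normK // -rmorphXn /phi /= ltcR ltNge.
    exact: Hall j.
  have Hsum : \sum_j `|y 0 j|^+2 * (`|d 0 j|^+2 - phi c) = 0.
    apply/le_anti/andP; split.
      have -> : \sum_j `|y 0 j|^+2 * (`|d 0 j|^+2 - phi c) =
          \sum_j `|y 0 j|^+2 * `|d 0 j|^+2 - phi c * \sum_j `|y 0 j|^+2.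
        rewrite mulr_sumr -sumrB; apply: eq_bigr => i _.
        by rewrite mulrBr [phi c * _]mulrC.
      by rewrite subr_le0.
    apply: sumr_ge0 => i _; apply: mulr_ge0; [exact: exprn_ge0|exact: ltW].
  have y0 : y = 0.
    apply/rowP => i; rewrite [in RHS]mxE.
    have := psumr_eq0P _ Hsum (i:=i) isT.
    move=> /(_ (fun i _ => mulr_ge0 (exprn_ge0 2 (normr_ge0 _)) (ltW (Hpos i)))).
    move/eqP; rewrite mulf_eq0 (gt_eqF (Hpos i)) orbF expf_eq0 /= normr_eq0.
    by move/eqP.
  by move: xn0; rewrite -(map_mx_eq0 phi) -/xc -yU y0 mul0mx eqxx.
exists (complex.Re (d 0 j)) => //.
have : eigenvalue Sc (phi (complex.Re (d 0 j))).
  apply/eigenvalueP; exists ((delta_mx 0 j : 'rV[R[i]]_n) *m U).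
    have ed : (delta_mx 0 j : 'rV[R[i]]_n) *m diag_mx d = d 0 j *: (delta_mx 0 j : 'rV[R[i]]_n) .
      apply/rowP => i. rewrite mul_mx_diag [LHS]mxE [RHS]mxE.
      case: (eqVneq i j) => [->|ne]; first by rewrite mulrC.
      have e0 : (delta_mx 0 j : 'rV[R[i]]_n) 0 i = 0 by rewrite mxE (negbTE ne) andbF.
      by rewrite e0 mulr0 mul0r.
    rewrite eqS !mulmxA -(mulmxA _ U) (mulmxV Uunit) mulmx1 ed.
    by rewrite -scalemxAl -dj.
  have Ufree : row_free U by rewrite row_free_unit.
  rewrite (mulmx_free_eq0 _ Ufree).
  apply/eqP => /matrixP /(_ 0 j); rewrite mxE !eqxx /= => /eqP.
  by rewrite mxE oner_eq0.
move=> H; rewrite eigenvalue_root_char -(fmorph_root phi) map_char_poly.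
by rewrite -eigenvalue_root_char.
Qed.
End Spec.

Lemma deg_pos n (adj : rel 'I_n) :
  simple_graph adj -> connected_graph adj -> (3 <= n)%N ->
  forall i, (0 < deg adj i)%N.
Proof.
move=> _ hc hn i.
have : [set~ i] != set0.
  by rewrite -card_gt0 cardsC1 card_ord; case: (n) hn => [|[|m]].
case/set0Pn => j; rewrite !inE => ji.
case/connectP: (hc i j) => [[|x p]] /= pth lastj.
  by rewrite lastj eqxx in ji.
case/andP: pth => aix _.
by apply/card_gt0P; exists x; rewrite inE.
Qed.

Lemma deg_sum (R : numDomainType) n (adj : rel 'I_n) v :
  \sum_j (adj v j)%:R = (deg adj v)%:R :> R.
Proof.
rewrite (eq_bigr (fun j => if adj v j then 1 else 0)); last by move=> j _; case: (adj v j).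
rewrite -big_mkcond sumr_const /deg cardsE //.
Qed.

Definition Smat (R : rcfType) n (adj : rel 'I_n) : 'M[R]_n :=
  \matrix_(i, j) ((adj i j)%:R / (Num.sqrt (deg adj i)%:R * Num.sqrt (deg adj j)%:R)).

Lemma transfer (R : rcfType) n (adj : rel 'I_n) (k : R) :
  (forall i, (0 < deg adj i)%N) ->
  eigenvalue (Smat R adj) k -> eigenvalue (nlap R adj) (1 - k).
Proof.
move=> hd /eigenvalueP [u uS un0].
pose sd i : R := Num.sqrt (deg adj i)%:R.
have sdp i : 0 < sd i by rewrite sqrtr_gt0 ltr0n.
have dsq i : (deg adj i)%:R = sd i ^+ 2 by rewrite sqr_sqrtr // ler0n.
have HS j : \sum_i u 0 i * Smat R adj i j = k * u 0 j.
  by have := congr1 (fun M : 'rV_n => M 0 j) uS; rewrite !mxE.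
apply/eigenvalueP; exists (\row_j (u 0 j * sd j)).
  apply/rowP => j; rewrite !mxE.
  rewrite (eq_bigr (fun i => u 0 i * sd i * (i == j)%:R - sd j * (u 0 i * Smat R adj i j)));
    last first.
    move=> i _; rewrite /Smat !mxE -/(sd i) -/(sd j) dsq.
    have := sdp i; have := sdp j.
    move=> h1 h2; field; rewrite ?gt_eqF //.
  rewrite sumrB -mulr_sumr HS (bigD1 j) //= eqxx mulr1 big1 ?addr0; last first.
    by move=> i /negbTE ->; rewrite mulr0.
  ring.
apply: contra un0 => /eqP w0; apply/eqP/rowP => j.
have := congr1 (fun M : 'rV_n => M 0 j) w0; rewrite !mxE => /eqP.
by rewrite mulf_eq0 (gt_eqF (sdp j)) orbF => /eqP.
Qed.

Theorem mainTheorem15 (R : realType) (n : nat) (adj : rel 'I_n) :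
  simple_graph adj -> connected_graph adj -> (3 <= n)%N ->
  (forall l : R, eigenvalue (nlap R adj) l -> 1 / 2 < `|1 - l|) ->
  forall v : 'I_n, exists2 w : 'I_n, adj v w & (deg adj w <= 3)%N.
Proof.
move=> hs hc hn hev v.
have [sa _] := hs.
case: (boolP [exists w, adj v w && (deg adj w <= 3)%N]).
  by case/existsP => w /andP [h1 h2]; exists w.
rewrite negb_exists => /forallP Hall; exfalso.
have hd := deg_pos hs hc hn.
pose sd i : R := Num.sqrt (deg adj i)%:R.
have sdp i : 0 < sd i by rewrite sqrtr_gt0 ltr0n.
have dsq i : (deg adj i)%:R = sd i ^+ 2 by rewrite sqr_sqrtr // ler0n.
have Ssym : (Smat R adj)^T = Smat R adj.
  apply/matrixP => i j; rewrite !mxE (sa j i) (mulrC (Num.sqrt _)) //.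
pose x : 'rV[R]_n := delta_mx 0 v.
have xn0 : x != 0.
  apply/eqP => /matrixP /(_ 0 v); rewrite !mxE !eqxx /= => /eqP.
  by rewrite oner_eq0.
have Hin : \sum_j ((x *m Smat R adj) 0 j)^+2 <= 1/4 * \sum_j (x 0 j)^+2.
  have -> : \sum_j (x 0 j)^+2 = 1.
    rewrite (bigD1 v) //= big1 ?addr0.
      by rewrite mxE !eqxx expr1n.
    by move=> j jv; rewrite mxE (negbTE jv) andbF expr2 mulr0.
  rewrite mulr1.
  have e j : (x *m Smat R adj) 0 j = Smat R adj v j by rewrite -rowE mxE.
  apply: (le_trans (y := \sum_j (adj v j)%:R / (4 * (deg adj v)%:R))).
    apply: ler_sum => j _; rewrite e mxE -/(sd v) -/(sd j).
    case avj: (adj v j) => /=; last by rewrite !mul0r expr2 mul0r.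
    have dj : (4 <= deg adj j)%N by have := Hall j; rewrite avj /= ltnNge.
    have dj' : 4 <= (deg adj j)%:R :> R by rewrite (ler_nat R 4).
    have dv : 0 < (deg adj v)%:R :> R by rewrite ltr0n.
    rewrite !div1r exprVn exprMn -!dsq.
    rewrite lef_pV2 ?posrE ?mulr_gt0 //; last by apply: (lt_le_trans _ dj').
    nra.
  rewrite -mulr_suml deg_sum.
  have dv : 0 < (deg adj v)%:R :> R by rewrite ltr0n.
  suff -> : (deg adj v)%:R / (4 * (deg adj v)%:R) = 1/4 :> R by [].
  by field; rewrite gt_eqF.
have [k ek hk] := spec_bound Ssym xn0 Hin.
have := hev (1 - k) (transfer hd ek).
have -> : 1 - (1 - k) = k by ring.
have : `|k| ^+ 2 <= 1/4 by rewrite real_normK ?num_real.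
have := normr_ge0 k.
move=> h0 h1 h2; move: (`|k|) h0 h1 h2 => a h0 h1 h2.
clear -h0 h1 h2; nra.
Qed.
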